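(* Let $x\in\mathcal X$ and $C_1,C_2\in\mathcal I$, and suppose the lines $\ell_{x,C_1}$ and $\ell_{x,C_2}$ intersect at some $\mu>0$. If $\ell_{x,C_1}$ has a larger intercept (value at $\mu=0$) than $\ell_{x,C_2}$, then $w(C_1)>w(C_2)$.
   Context: Let $(X,Y)\sim P_{XY}$ on $\mathcal X\times\mathcal Y$, $\alpha\in(0,1)$, $\mathcal I$ a finite collection of subsets of $\mathcal Y$, $w:\mathcal I\to(0,B)$ a bounded positive weight. For $C\in\mathcal I$ let $p_C(x)=\mathbb P(Y\in C\mid X=x)$ and $\ell_{x,C}(\mu)=w(C)p_C(x)+\mu(p_C(x)-(1-\alpha))$. *)

(* Defs.v *)
From HB Require Import structures.
From mathcomp Require Import all_boot all_order all_algebra.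
From mathcomp Require Import all_classical all_reals all_analysis.
Set Implicit Arguments. Unset Strict Implicit. Unset Printing Implicit Defensive.
Import Order.TTheory GRing.Theory Num.Theory.
Local Open Scope ring_scope.
Local Open Scope classical_set_scope.

(* The conditional law of Y given X = x is modelled by a family
   PYgX : X -> probability Y R (a regular conditional distribution),
   so that p_C(x) = P(Y \in C | X = x) = PYgX x C. *)
Definition pC d1 d2 (X : measurableType d1) (Y : measurableType d2)
  (R : realType) (PYgX : X -> probability Y R) (C : set Y) (x : X) : R :=
  fine (PYgX x C).

Definition ell d1 d2 (X : measurableType d1) (Y : measurableType d2)
  (R : realType) (PYgX : X -> probability Y R) (alpha : R) (w : set Y -> R)
  (x : X) (C : set Y) (mu : R) : R :=
  w C * pC PYgX C x + mu * (pC PYgX C x - (1 - alpha)).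

(* Main.v *)
Require Import Defs.
From HB Require Import structures.
From mathcomp Require Import all_boot all_order all_algebra.
From mathcomp Require Import all_classical all_reals all_analysis.
From mathcomp Require Import lra.
Import Order.TTheory GRing.Theory Num.Theory.
Local Open Scope ring_scope.
Local Open Scope classical_set_scope.

Theorem lemma4 (d1 d2 : measure_display) (X : measurableType d1)
  (Y : measurableType d2) (R : realType) (PYgX : X -> probability Y R)
  (alpha : R) (I : set (set Y)) (w : set Y -> R) (B : R)
  (halpha : 0 < alpha < 1)
  (hI : finite_set I) (hImeas : forall C, I C -> measurable C)
  (hw : forall C, I C -> 0 < w C < B)
  (x : X) (C1 C2 : set Y) (hC1 : I C1) (hC2 : I C2)
  (hint : exists mu : R, 0 < mu /\
     ell PYgX alpha w x C1 mu = ell PYgX alpha w x C2 mu)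
  (hicpt : ell PYgX alpha w x C1 0 > ell PYgX alpha w x C2 0) :
  w C1 > w C2.
Proof.
case: hint => mu [mu0]; rewrite /ell in hicpt * => heq.
have p1ge0 : 0 <= pC PYgX C1 x by rewrite /pC fine_ge0 // measure_ge0.
have /andP[w20 _] := hw _ hC2.
move: hicpt heq p1ge0 w20 mu0.
set p2 := pC _ _ _; set p1 := pC _ _ _.
move=> h1 h2 h3 h4 h5.
rewrite !mul0r !addr0 in h1.
have hp : mu * (p1 - p2) < 0.
  rewrite mulrBr; move: h2; rewrite !mulrBr. lra.
have hp12 : p1 < p2.
  by move: hp; rewrite pmulr_rlt0 // subr_lt0.
have hw2 : w C2 * p1 < w C2 * p2 by rewrite ltr_pM2l.
have hw1 : w C2 * p1 < w C1 * p1 by apply: lt_trans hw2 h1.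
rewrite ltNge; apply/negP => hle.
have : w C1 * p1 <= w C2 * p1 by rewrite ler_wpM2r.
lra.
Qed.
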